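(* Every $E$-sequence is isomorphic to the evolutionary sequence of some phylogenetic quiver.
   Context: A quiver consists of a class of vertices and, for each ordered pair of vertices $(A,B)$, a set of edges $A\to B$ (loops and multiple edges allowed). An evolution of length $m\ge 0$ is a sequence $A_0\leftarrow A_1\leftarrow\cdots\leftarrow A_m$ of vertices together with edges $A_k\to A_{k-1}$ ($1\le k\le m$); $A_0$ is its initial and $A_m$ its terminal vertex. Write $A\le B$ ($A$ is an ancestor of $B$) if there is an evolution with initial vertex $A$ and terminal vertex $B$; $A,B$ are isotypic ($A\sim B$) if $A\le B$ and $B\le A$. A vertex $A$ is primitive if every ancestor of $A$ is isotypic to $A$. A full evolution for $X$ is an evolution with primitive initial vertex and terminal vertex $X$. The height $h(X)$ is the smallest length of a full evolution for $X$ ($\infty$ if none). An evolution $\alpha=(A_0\leftarrow\cdots\leftarrow A_m)$ embeds in $\beta=(B_0\leftarrow\cdots\leftarrow B_n)$ if $m\le n$ and there are $0\le r_0<\cdots<r_m\le n$ with $A_k\sim B_{r_k}$. A universal evolution for $X$ is a full evolution for $X$ embedding in every full evolution for $X$; $X$ is phylogenetic if one exists. A quiver is monotonous if $h(A)\ge h(B)$ for every edge $A\to B$; small if its isotypy classes form a set; phylogenetic if small, monotonous, and all vertices phylogenetic. Evolutionary sequence of a phylogenetic quiver $\mathcal O$: let $\mathcal O_m$ be the set of isotypy classes $[A]$ of vertices of height $m$, partially ordered by $[A]\le[B]$ iff $A\le B$; for $m\ge1$ the parental map $p:\mathcal O_m\to\mathcal O_{m-1}$ is $p([A])=[A_{m-1}]$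 where $A_0\leftarrow\cdots\leftarrow A_{m-1}\leftarrow A_m=A$ is any universal evolution for $A$ (this is well defined). The evolutionary sequence is the family of posets $(\mathcal O_m,\le)_{m\ge0}$ with the maps $p$. An $E$-sequence consists of partially ordered sets $(P_m,\le)_{m\ge0}$ and maps $p=p_m:P_m\to P_{m-1}$ ($m\ge1$) such that the partial order on $P_0$ is trivial (equality) and for all $m\ge1$ and $a,b\in P_m$, $a\le b$ implies $p(a)=p(b)$. Two $E$-sequences $P,P'$ are isomorphic if there are bijections $f_m:P_m\to P'_m$ ($m\ge0$) with $p'f_m=f_{m-1}p$ for $m\ge1$ and $a\le b\iff f_m(a)\le f_m(b)$ for all $a,b\in P_m$. *)

(* Defs.v *)
Set Implicit Arguments.

Section Quivers.
Variable V : Type.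
Variable Edge : V -> V -> Type.

(* An evolution A_0 <- A_1 <- ... <- A_m: length m, vertices vx 0 .. vx m
   (values beyond m are irrelevant), and edges A_{k+1} -> A_k. *)
Record evolution := Evol {
  ev_len : nat;
  ev_vx : nat -> V;
  ev_edge : forall k, k < ev_len -> Edge (ev_vx (S k)) (ev_vx k)
}.

Definition initial (e : evolution) : V := ev_vx e 0.
Definition terminal (e : evolution) : V := ev_vx e (ev_len e).

Definition ancestor (A B : V) : Prop :=
  exists e : evolution, initial e = A /\ terminal e = B.

Definition isotypic (A B : V) : Prop := ancestor A B /\ ancestor B A.

Definition primitive (A : V) : Prop :=
  forall B, ancestor B A -> isotypic B A.

Definition full_evolution (e : evolution) (X : V) : Prop :=
  primitive (initial e) /\ terminal e = X.

(* h(X) = m  (finite height); h(X) = infinity iff no m satisfies this *)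
Definition has_height (X : V) (m : nat) : Prop :=
  (exists e, full_evolution e X /\ ev_len e = m) /\
  (forall e, full_evolution e X -> m <= ev_len e).

Definition embeds (a b : evolution) : Prop :=
  ev_len a <= ev_len b /\
  exists r : nat -> nat,
    (forall k, k < ev_len a -> r k < r (S k)) /\
    r (ev_len a) <= ev_len b /\
    (forall k, k <= ev_len a -> isotypic (ev_vx a k) (ev_vx b (r k))).

Definition universal_evolution (e : evolution) (X : V) : Prop :=
  full_evolution e X /\ forall e', full_evolution e' X -> embeds e e'.

Definition phylogenetic_vertex (X : V) : Prop :=
  exists e, universal_evolution e X.

(* h(A) >= h(B) for every edge A -> B (with h = infinity allowed) *)
Definition monotonous : Prop :=
  forall A B, Edge A B -> forall m, has_height A m ->
    exists k, has_height B k /\ k <= m.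

(* Smallness is automatic: V is a type, so isotypy classes form a set. *)
Definition phylogenetic_quiver : Prop :=
  monotonous /\ forall X, phylogenetic_vertex X.

End Quivers.

Record Esequence := ESeq {
  es_P : nat -> Type;
  es_le : forall m, es_P m -> es_P m -> Prop;
  es_par : forall m, es_P (S m) -> es_P m;
  es_refl : forall m a, @es_le m a a;
  es_antisym : forall m a b, @es_le m a b -> @es_le m b a -> a = b;
  es_trans : forall m a b c, @es_le m a b -> @es_le m b c -> @es_le m a c;
  es_le0 : forall a b, @es_le 0 a b -> a = b;
  es_par_le : forall m a b, @es_le (S m) a b -> es_par a = es_par b
}.

(* The E-sequence P is isomorphic to the evolutionary sequence of the
   quiver (V, Edge), via f m : P m -> V choosing a representative of the
   isotypy class f_m(a) in O_m. *)
Definition iso_to_evolutionary_sequence (P : Esequence) (V : Type)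
    (Edge : V -> V -> Type) (f : forall m, es_P P m -> V) : Prop :=
  (forall m a, has_height Edge (f m a) m) /\
  (forall m X, has_height Edge X m -> exists a, isotypic Edge X (f m a)) /\
  (forall m a b, isotypic Edge (f m a) (f m b) -> a = b) /\
  (forall m (a b : es_P P m), @es_le P m a b <-> ancestor Edge (f m a) (f m b)) /\
  (* compatibility with parental maps: p'([f_{m+1} a]) = [f_m (p a)] *)
  (forall m (a : es_P P (S m)) (e : evolution Edge),
      universal_evolution e (f (S m) a) ->
      isotypic Edge (ev_vx e (ev_len e - 1)) (f m (@es_par P m a))).

(* Main.v *)
Require Import Defs.
From Stdlib Require Import Lia Arith Eqdep_dec PeanoNat.

Definition VV (P : Esequence) := sigT (es_P P).

Inductive edge (P : Esequence) : VV P -> VV P -> Type :=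
| e_par : forall m (a : es_P P (S m)),
    edge P (existT _ (S m) a) (existT _ m (es_par P m a))
| e_le : forall m (a b : es_P P m), es_le P m a b ->
    edge P (existT _ m b) (existT _ m a).

Definition lv {P : Esequence} (x : VV P) : nat := projT1 x.

Definition parV {P : Esequence} (x : VV P) : VV P :=
  match x with
  | existT _ 0 a => existT _ 0 a
  | existT _ (S j) a => existT _ j (es_par P j a)
  end.

Fixpoint it {P : Esequence} (i : nat) (x : VV P) : VV P :=
  match i with 0 => x | S i => it i (parV x) end.

Definition leV {P : Esequence} (x y : VV P) : Prop :=
  exists m a b, x = existT _ m a /\ y = existT _ m b /\ es_le P m a b.

Lemma inj2 {P : Esequence} m (a b : es_P P m) :
  existT (es_P P) m a = existT _ m b -> a = b.
Proof. intro H. apply inj_pair2_eq_dec in H; [exact H| exact Nat.eq_dec]. Qed.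

Lemma leV_trans {P} (x y z : VV P) : leV x y -> leV y z -> leV x z.
Proof.
  intros (m & a & b & -> & -> & H1) (m' & b' & c & E & -> & H2).
  assert (m = m') by (apply (f_equal (@projT1 _ _)) in E; exact E). subst m'.
  apply inj2 in E. subst b'.
  exists m, a, c. repeat split; auto. eapply es_trans; eauto.
Qed.

Lemma leV_inj {P} m (a b : es_P P m) : leV (existT _ m a) (existT _ m b) -> es_le P m a b.
Proof.
  intros (m' & a' & b' & E1 & E2 & H).
  assert (m = m') by (apply (f_equal (@projT1 _ _)) in E1; exact E1). subst m'.
  apply inj2 in E1. apply inj2 in E2. subst. exact H.
Qed.

Lemma edge_inv {P} (x y : VV P) (e : edge P x y) :
  (exists j (a : es_P P (S j)), x = existT _ (S j) a /\ y = existT _ j (es_par P j a))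
  \/ (exists m (a b : es_P P m), es_le P m a b /\ x = existT _ m b /\ y = existT _ m a).
Proof. destruct e; [left | right]; eauto 10. Qed.

Lemma edge_lv {P} (x y : VV P) : edge P x y -> lv y <= lv x.
Proof. intro e; destruct e; simpl; lia. Qed.

Lemma edge_same {P} (x y : VV P) : edge P x y -> lv x = lv y -> leV y x.
Proof. intros e H; destruct e; simpl in H; [lia|]. exists m, a, b; auto. Qed.

Lemma path_mono {P} n (vx : nat -> VV P)
  (E : forall k, k < n -> edge P (vx (S k)) (vx k)) :
  lv (vx 0) <= lv (vx n).
Proof.
  induction n.
  - lia.
  - assert (lv (vx n) <= lv (vx (S n))) by (apply edge_lv, E; lia).
    assert (lv (vx 0) <= lv (vx n)) by (apply IHn; intros; apply E; lia). lia.
Qed.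

Lemma leV_refl {P} (x : VV P) : leV x x.
Proof. destruct x as [m a]. exists m, a, a. repeat split. apply es_refl. Qed.

Lemma path_same {P} n (vx : nat -> VV P)
  (E : forall k, k < n -> edge P (vx (S k)) (vx k)) :
  lv (vx 0) = lv (vx n) -> leV (vx 0) (vx n).
Proof.
  induction n; intro H.
  - apply leV_refl.
  - assert (lv (vx n) <= lv (vx (S n))) by (apply edge_lv, E; lia).
    assert (lv (vx 0) <= lv (vx n)) by (apply (path_mono n); intros; apply E; lia).
    apply leV_trans with (vx n).
    + apply IHn; [intros; apply E; lia | lia].
    + apply edge_same; [apply E; lia | lia].
Qed.

Lemma anc_lv {P} (x y : VV P) : ancestor (edge P) x y -> lv x <= lv y.
Proof.
  intros [e [<- <-]]. unfold initial, terminal.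
  apply (path_mono (ev_len e) (ev_vx e) (fun k H => ev_edge e H)).
Qed.

Lemma anc_same {P} (x y : VV P) : ancestor (edge P) x y -> lv x = lv y -> leV x y.
Proof.
  intros [e [<- <-]]. unfold initial, terminal.
  apply (path_same (ev_len e) (ev_vx e) (fun k H => ev_edge e H)).
Qed.

Definition one_evol {P} (x y : VV P) (e : edge P x y) : evolution (edge P).
Proof.
  refine (@Evol _ (edge P) 1 (fun k => match k with 0 => y | _ => x end) _).
  intros [|k] H; [exact e | exfalso; lia].
Defined.

Lemma anc_edge {P} (x y : VV P) : edge P x y -> ancestor (edge P) y x.
Proof. intro e. exists (one_evol x y e). split; reflexivity. Qed.

Lemma anc_refl {P} (x : VV P) : ancestor (edge P) x x.
Proof.
  unshelve eexists (@Evol _ (edge P) 0 (fun _ => x) _).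
  - intros k H; exfalso; lia.
  - split; reflexivity.
Qed.

Lemma iso_refl {P} (x : VV P) : isotypic (edge P) x x.
Proof. split; apply anc_refl. Qed.

Lemma prim0 {P} (x : VV P) : primitive (edge P) x -> lv x = 0.
Proof.
  destruct x as [[|j] a]; intro H; [reflexivity|].
  destruct (H _ (anc_edge _ _ (e_par P j a))) as [_ H2].
  apply anc_lv in H2. simpl in H2. lia.
Qed.

Lemma lv0_prim {P} (x : VV P) : lv x = 0 -> primitive (edge P) x.
Proof.
  intros Hx B HB.
  assert (lv B = lv x) by (apply anc_lv in HB; lia).
  destruct (anc_same _ _ HB H) as (m & a & b & -> & -> & Hl).
  simpl in Hx. subst m. apply es_le0 in Hl. subst. apply iso_refl.
Qed.

Lemma lv_par {P} (x : VV P) : lv (parV x) = lv x - 1.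
Proof. destruct x as [[|j] a]; simpl; lia. Qed.

Lemma lv_it {P} i (x : VV P) : lv (it i x) = lv x - i.
Proof.
  revert x; induction i; intro x; simpl.
  - lia.
  - rewrite IHi, lv_par. lia.
Qed.

Lemma it_S {P} i (x : VV P) : it (S i) x = parV (it i x).
Proof. revert x; induction i; intro x; [reflexivity|]. simpl in *. apply IHi. Qed.

Lemma edge_parV {P} (y : VV P) : 1 <= lv y -> edge P y (parV y).
Proof.
  destruct y as [[|j] a]; simpl; intro H; [exfalso; lia | exact (e_par P j a)].
Qed.

Definition chain {P} (x : VV P) : evolution (edge P).
Proof.
  refine (@Evol _ (edge P) (lv x) (fun k => it (lv x - k) x) _).
  intros k H.
  replace (lv x - k) with (S (lv x - S k)) by lia.
  rewrite it_S. apply edge_parV. rewrite lv_it. lia.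
Defined.

Lemma chain_full {P} (x : VV P) : full_evolution (chain x) x.
Proof.
  split.
  - apply lv0_prim. unfold initial; simpl. rewrite lv_it. lia.
  - unfold terminal; simpl. rewrite Nat.sub_diag. reflexivity.
Qed.

Lemma path_lemma {P} n (vx : nat -> VV P)
  (E : forall k, k < n -> edge P (vx (S k)) (vx k)) :
  lv (vx 0) = 0 ->
  exists r : nat -> nat,
    (forall k, k < lv (vx n) -> r k < r (S k)) /\ r (lv (vx n)) = n /\
    (forall k, k <= lv (vx n) -> vx (r k) = it (lv (vx n) - k) (vx n)).
Proof.
  intro H0. induction n.
  - exists (fun _ => 0). rewrite H0. split; [intros; lia|split; [reflexivity|]].
    intros k Hk. replace k with 0 by lia. reflexivity.
  - destruct IHn as (r' & R1 & R2 & R3); [intros; apply E; lia|].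
    destruct (edge_inv _ _ (E n (Nat.lt_succ_diag_r n))) as
      [(j & a & Ex & Ey) | (m & a & b & Hl & Ex & Ey)].
    + rewrite Ey in R1, R2, R3. simpl in R1, R2, R3.
      exists (fun k => if k <=? j then r' k else S n).
      rewrite Ex; unfold lv; cbn [projT1]. repeat split.
      * intros k Hk. destruct (Nat.leb_spec k j); destruct (Nat.leb_spec (S k) j);
          try lia. -- apply R1; lia. -- replace k with j by lia. lia.
      * destruct (Nat.leb_spec (S j) j); [lia | reflexivity].
      * intros k Hk. destruct (Nat.leb_spec k j).
        -- rewrite R3 by lia. rewrite <- Ey.
           replace (S j - k) with (S (j - k)) by lia. simpl.
           rewrite Ey. reflexivity.
        -- replace k with (S j) by lia. rewrite Nat.sub_diag. simpl.
           exact Ex.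
    + rewrite Ey in R1, R2, R3. simpl in R1, R2, R3.
      exists (fun k => if k <? m then r' k else S n).
      rewrite Ex; unfold lv; cbn [projT1]. repeat split.
      * intros k Hk. destruct (Nat.ltb_spec k m); destruct (Nat.ltb_spec (S k) m);
          try lia.
          -- apply R1; lia.
          -- replace m with (S k) in R2 by lia. pose proof (R1 k ltac:(lia)). lia.
      * destruct (Nat.ltb_spec m m); [lia | reflexivity].
      * intros k Hk. destruct (Nat.ltb_spec k m).
        -- rewrite R3 by lia.
           replace (m - k) with (S (m - S k)) by lia. simpl.
           f_equal. destruct m as [|j]; [lia|]. simpl. f_equal.
           apply es_par_le with (m := j); exact Hl.
        -- replace k with m by lia. rewrite Nat.sub_diag. simpl.
           exact Ex.
Qed.

Lemma r_ge {P : Type} (r : nat -> nat) M :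
  (forall k, k < M -> r k < r (S k)) -> forall k, k <= M -> k <= r k.
Proof. intros H k; induction k; intro Hk; [lia|]. specialize (H k). specialize (IHk ltac:(lia)). lia. Qed.

Lemma full_path {P} (e : evolution (edge P)) (x : VV P) :
  full_evolution e x ->
  exists r : nat -> nat,
    (forall k, k < lv x -> r k < r (S k)) /\ r (lv x) = ev_len e /\
    (forall k, k <= lv x -> ev_vx e (r k) = it (lv x - k) x).
Proof.
  intros [Hp Ht]. apply prim0 in Hp. unfold initial, terminal in *.
  destruct (path_lemma (ev_len e) (ev_vx e) (fun k H => ev_edge e H) Hp) as (r & R).
  rewrite Ht in R. exists r; exact R.
Qed.

Lemma full_len {P} (e : evolution (edge P)) (x : VV P) :
  full_evolution e x -> lv x <= ev_len e.
Proof.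
  intro H. destruct (full_path e x H) as (r & R1 & R2 & R3).
  rewrite <- R2. apply (r_ge (P:=unit) r (lv x) R1). lia.
Qed.

Lemma height {P} (x : VV P) : has_height (edge P) x (lv x).
Proof.
  split.
  - exists (chain x). split; [apply chain_full | reflexivity].
  - intros e He. apply (full_len e x He).
Qed.

Lemma height_uniq {P} (x : VV P) m : has_height (edge P) x m -> m = lv x.
Proof.
  intros [[e [He Hl]] Hmin].
  pose proof (full_len e x He). pose proof (Hmin _ (chain_full x)).
  simpl in *. lia.
Qed.

Lemma chain_univ {P} (x : VV P) : universal_evolution (chain x) x.
Proof.
  split; [apply chain_full|].
  intros e' He'. pose proof (full_len e' x He').
  destruct (full_path e' x He') as (r & R1 & R2 & R3).
  split; [simpl; lia|]. exists r. simpl. split; [exact R1|split; [lia|]].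
  intros k Hk. rewrite R3 by exact Hk. apply iso_refl.
Qed.

Theorem theorem8p1 (P : Esequence) :
  exists (V : Type) (Edge : V -> V -> Type) (f : forall m, es_P P m -> V),
    phylogenetic_quiver Edge /\ iso_to_evolutionary_sequence P Edge f.
Proof.
  exists (VV P), (edge P), (fun m a => existT _ m a).
  split; [split|].
  - intros A B e m Hm. apply height_uniq in Hm. subst.
    exists (lv B). split; [apply height | apply edge_lv, e].
  - intro X. exists (chain X). apply chain_univ.
  - split; [|split; [|split; [|split]]].
    + intros m a. apply (height (existT _ m a)).
    + intros m X HX. apply height_uniq in HX. destruct X as [m' a].
      simpl in HX. subst. exists a. apply iso_refl.
    + intros m a b [H1 H2].
      apply anc_same in H1; [|reflexivity]. apply anc_same in H2; [|reflexivity].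
      apply leV_inj in H1. apply leV_inj in H2. apply es_antisym with (m := m); auto.
    + intros m a b. split.
      * intro H. apply (anc_edge _ _ (e_le P m a b H)).
      * intro H. apply anc_same in H; [|reflexivity]. apply leV_inj in H; exact H.
    + intros m a e [Hf Hu].
      pose proof (full_len e _ Hf) as L1. simpl in L1.
      destruct (Hu _ (chain_full (existT _ (S m) a))) as [L2 _]. simpl in L2.
      destruct (full_path e _ Hf) as (r & R1 & R2 & R3). simpl in R1, R2.
      assert (ev_len e = S m) by lia.
      pose proof (r_ge (P:=unit) r (S m) R1 m ltac:(lia)).
      pose proof (R1 m ltac:(lia)).
      assert (r m = m) by lia.
      specialize (R3 m ltac:(simpl; lia)). rewrite H2 in R3.
      change (lv (existT (es_P P) (S m) a)) with (S m) in R3. replace (S m - m) with 1 in R3 by lia.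
      replace (ev_len e - 1) with m by lia. rewrite R3. simpl. apply iso_refl.
Qed.
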